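(* Let $A,B\in\operatorname{Sym}(n,\mathbb{R})$ with $\operatorname{tr}A=\operatorname{tr}B=0$, and assume $\Gamma_A\subset\Gamma_B$, where $\Gamma_M:=\{z\in\mathbb{R}^n:{}^tzMz\le0\}$. Then there is $c\in\mathbb{R}$ with $B=cA$. *)

(* Defs.v *)
From HB Require Import structures.
From mathcomp Require Import all_boot all_order all_algebra.
From mathcomp Require Import reals.
Set Implicit Arguments. Unset Strict Implicit. Unset Printing Implicit Defensive.
Import Order.TTheory GRing.Theory Num.Theory.
Local Open Scope ring_scope.

Definition Gamma (R : realType) (n : nat) (M : 'M[R]_n) : 'cV[R]_n -> Prop :=
  fun z => ((z^T *m M *m z) 0 0 <= 0).

(* Main.v *)
Require Import Defs.
From HB Require Import structures.
From mathcomp Require Import all_boot all_order all_algebra.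
From mathcomp Require Import reals.
From mathcomp Require Import boolp classical_sets.
From mathcomp Require Import ring lra.
Import Order.TTheory GRing.Theory Num.Theory.
Local Open Scope ring_scope.
Set Implicit Arguments. Unset Strict Implicit.

Section S.
Variables (R : realType) (n : nat).
Implicit Types (M N : 'M[R]_n) (x y z : 'cV[R]_n).

Definition bil M x y := (x^T *m M *m y) 0 0.

Lemma bilDl M x y z : bil M (x + y) z = bil M x z + bil M y z.
Proof. by rewrite /bil linearD /= !mulmxDl mxE. Qed.
Lemma bilDr M x y z : bil M z (x + y) = bil M z x + bil M z y.
Proof. by rewrite /bil !mulmxDr mxE. Qed.
Lemma bilZl M a x y : bil M (a *: x) y = a * bil M x y.
Proof. by rewrite /bil linearZ /= -!scalemxAl mxE. Qed.
Lemma bilZr M a x y : bil M x (a *: y) = a * bil M x y.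
Proof. by rewrite /bil -!scalemxAr mxE. Qed.
Lemma bilML M N a z : bil (a *: M - N) z z = a * bil M z z - bil N z z.
Proof. by rewrite /bil mulmxBr mulmxBl -scalemxAr -scalemxAl !mxE. Qed.
Lemma bilN M z : bil (- M) z z = - bil M z z.
Proof. by rewrite /bil mulmxN mulNmx mxE. Qed.
Lemma bil_sym M x y : M^T = M -> bil M x y = bil M y x.
Proof.
move=> sM; rewrite /bil.
have -> : x^T *m M *m y = (y^T *m M *m x)^T by rewrite !trmx_mul trmxK sM mulmxA.
by rewrite [LHS]mxE.
Qed.
Lemma bil_delta M i j : bil M (delta_mx i 0) (delta_mx j 0) = M i j.
Proof.
by rewrite /bil trmx_delta -rowE -colE !mxE.
Qed.

Lemma bil_exp M x y t : M^T = M ->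
  bil M (x + t *: y) (x + t *: y) = bil M x x + 2 * t * bil M x y + t ^+ 2 * bil M y y.
Proof.
move=> sM; rewrite !(bilDl, bilDr, bilZl, bilZr) (bil_sym x y sM); ring.
Qed.

Lemma psd_tr0 M : M^T = M -> \tr M = 0 -> (forall z, 0 <= bil M z z) -> M = 0.
Proof.
move=> sM tM pM.
have dg i : M i i = 0.
  move: tM; rewrite /mxtrace => /psumr_eq0P; apply => // j _.
  by rewrite -bil_delta.
apply/matrixP => i j; rewrite mxE.
have h t : 0 <= 2 * t * M i j.
  have := pM (delta_mx i 0 + t *: delta_mx j 0).
  by rewrite bil_exp // !bil_delta !dg; lra.
have := h 1; have := h (-1); lra.
Qed.


Lemma key M N x y : M^T = M -> N^T = N ->
  (forall z, bil M z z <= 0 -> bil N z z <= 0) ->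
  bil M x x < 0 -> 0 < bil M y y ->
  bil M y y * bil N x x <= bil N y y * bil M x x.
Proof.
move=> sM sN incl ha hc.
set a := bil M x x in ha *; set c := bil M y y in hc *.
set b := bil M x y; set a' := bil N x x; set b' := bil N x y; set c' := bil N y y.
have hD : 0 <= b ^+ 2 - a * c by nra.
set s := Num.sqrt (b ^+ 2 - a * c).
have s0 : 0 <= s by exact: sqrtr_ge0.
have s2 : s ^+ 2 = b ^+ 2 - a * c by rewrite sqr_sqrtr.
have cn : c != 0 by rewrite gt_eqF.
have root t : c * t ^+ 2 + 2 * b * t + a = 0 -> bil N (x + t *: y) (x + t *: y) <= 0.
  move=> ht; apply: incl; rewrite bil_exp //; rewrite -/a -/b -/c; lra.
pose t1 := (- b - s) / c; pose t2 := (- b + s) / c.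
have rt u : c * (c * (u / c) ^+ 2 + 2 * b * (u / c) + a) = u ^+ 2 + 2 * b * u + a * c.
  have cu : c * (u / c) = u by rewrite mulrC divfK.
  by move: (u / c) cu => v <-; ring.
have rr u : u ^+ 2 + 2 * b * u + a * c = 0 -> c * (u / c) ^+ 2 + 2 * b * (u / c) + a = 0.
  move=> hu; have := rt u; rewrite hu => /eqP; rewrite mulf_eq0 (negbTE cn) /= => /eqP //.
have e1 : (- b - s) ^+ 2 + 2 * b * (- b - s) + a * c = 0.
  have -> : (- b - s) ^+ 2 + 2 * b * (- b - s) + a * c = s ^+ 2 - (b ^+ 2 - a * c) by ring.
  by rewrite s2 subrr.
have e2 : (- b + s) ^+ 2 + 2 * b * (- b + s) + a * c = 0.
  have -> : (- b + s) ^+ 2 + 2 * b * (- b + s) + a * c = s ^+ 2 - (b ^+ 2 - a * c) by ring.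
  by rewrite s2 subrr.
have n1 : - b - s < 0 by nra.
have n2 : 0 < - b + s by nra.
have ic : 0 < c^-1 by rewrite invr_gt0.
have T1 : (- b - s) / c < 0 by rewrite pmulr_llt0.
have T2 : 0 < (- b + s) / c by rewrite mulr_gt0.
have F1 := rr _ e1; have F2 := rr _ e2.
have G1 := root _ F1; have G2 := root _ F2.
move: T1 T2 F1 F2 G1 G2; rewrite !bil_exp // -/a' -/b' -/c'.
move: ((- b - s) / c) ((- b + s) / c) => u v T1 T2 F1 F2 G1 G2.
have H1 : c * (a' + 2 * u * b' + u ^+ 2 * c') <= 0 by rewrite pmulr_rle0.
have H2 : c * (a' + 2 * v * b' + v ^+ 2 * c') <= 0 by rewrite pmulr_rle0.
have K1 : (c * a' - c' * a) + 2 * (c * b' - c' * b) * u <= 0.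
  have -> : (c * a' - c' * a) + 2 * (c * b' - c' * b) * u =
     c * (a' + 2 * u * b' + u ^+ 2 * c') - c' * (c * u ^+ 2 + 2 * b * u + a) by ring.
  by rewrite F1 mulr0 subr0.
have K2 : (c * a' - c' * a) + 2 * (c * b' - c' * b) * v <= 0.
  have -> : (c * a' - c' * a) + 2 * (c * b' - c' * b) * v =
     c * (a' + 2 * v * b' + v ^+ 2 * c') - c' * (c * v ^+ 2 + 2 * b * v + a) by ring.
  by rewrite F2 mulr0 subr0.
move: K1 K2; set al := c * a' - c' * a; set be := c * b' - c' * b => K1 K2.
have : al * (v - u) <= 0.
  have -> : al * (v - u) = v * (al + 2 * be * u) + (- u) * (al + 2 * be * v) by ring.
  have : v * (al + 2 * be * u) <= 0 by rewrite pmulr_rle0.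
  have : (- u) * (al + 2 * be * v) <= 0 by rewrite pmulr_rle0 // oppr_gt0.
  lra.
rewrite pmulr_lle0; last lra.
rewrite /al; lra.
Qed.
End S.
Theorem theorem2p2 (R : realType) (n : nat) (A B : 'M[R]_n)
  (symA : A^T = A) (symB : B^T = B)
  (trA : \tr A = 0) (trB : \tr B = 0)
  (incl : forall z : 'cV[R]_n, Gamma A z -> Gamma B z) :
  exists c : R, B = c *: A.
Proof.
have inc z : bil A z z <= 0 -> bil B z z <= 0 by exact: incl.
have zeroB : A = 0 -> exists c : R, B = c *: A.
  move=> A0; exists 0; rewrite scale0r.
  have : - B = 0.
    apply: psd_tr0; first by rewrite linearN /= symB.
      by rewrite linearN /= trB oppr0.
    move=> z; rewrite bilN oppr_ge0; apply: inc.
    by rewrite /bil A0 mulmx0 mul0mx mxE.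
  by move/eqP; rewrite oppr_eq0 => /eqP.
have [[x hx]|nx] := pselect (exists x, bil A x x < 0); last first.
  apply: zeroB; apply: psd_tr0 => // z; rewrite leNgt; apply/negP => h.
  by apply: nx; exists z.
have [[y hy]|ny] := pselect (exists y, 0 < bil A y y); last first.
  apply: zeroB; apply/eqP; rewrite -oppr_eq0; apply/eqP.
  apply: psd_tr0; first by rewrite linearN /= symA.
    by rewrite linearN /= trA oppr0.
  move=> z; rewrite bilN oppr_ge0 leNgt; apply/negP => h.
  by apply: ny; exists z.
pose E : set R := fun r => exists y, 0 < bil A y y /\ r = bil B y y / bil A y y.
have ubE w : bil A w w < 0 -> ubound E (bil B w w / bil A w w).
  move=> hw r [v [hv ->]].
  have := key symA symB inc hw hv.
  rewrite ler_pdivrMr // mulrAC ler_ndivlMr //.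
  by rewrite [X in X <= _]mulrC [X in _ <= X]mulrC.
have hsE : has_sup E by split; [exists (bil B y y / bil A y y), y | exists (bil B x x / bil A x x); exact: ubE].
set l := sup E.
exists l.
have : l *: A - B = 0.
  apply: psd_tr0.
  - by rewrite linearB /= linearZ /= symA symB.
  - by rewrite linearB /= mxtraceZ trA trB mulr0 subr0.
  move=> z; rewrite bilML subr_ge0.
  have [hz|hz|hz] := ltgtP (bil A z z) 0.
  - have : l <= bil B z z / bil A z z by apply: ge_sup => //; [exists (bil B y y / bil A y y), y | exact: ubE].
    by rewrite ler_ndivlMr // mulrC.
  - have : bil B z z / bil A z z <= l by apply: sup_upper_bound => //; exists z.
    by rewrite ler_pdivrMr // mulrC.
  - by rewrite hz mulr0; apply: inc; rewrite hz.
by move/eqP; rewrite subr_eq0 => /eqP <-.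
Qed.
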